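(* Let $n,p,q$ be positive integers with $q<p$, let $\sigma>0$, and let $\boldsymbol{\Sigma}\in\mathbb{R}^{p\times p}$ be symmetric positive definite. Let $\mathbf{y}=\mathbf{X}\boldsymbol{\beta}^\star+\boldsymbol{\epsilon}$, where the rows of $\mathbf{X}\in\mathbb{R}^{n\times p}$ are i.i.d. $\mathcal{N}(0,\boldsymbol{\Sigma})$, $\boldsymbol{\epsilon}\sim\mathcal{N}(0,\sigma^2\mathbb{I}_n)$ is independent of $\mathbf{X}$, and $\boldsymbol{\beta}^\star=(\boldsymbol{\beta}_1^{\star\prime},\mathbf{0}')'$ with $\boldsymbol{\beta}_1^\star\in\mathbb{R}^q$ having all entries nonzero. Let $\lambda,\eta>0$ and let $\widehat{\boldsymbol{\beta}}$ be the generalized Elastic Net estimator (defined in the context). Then $$\mathbb{P}\left(\mathrm{sign}(\widehat{\boldsymbol{\beta}})=\mathrm{sign}(\boldsymbol{\beta}^\star)\right)\geq \mathbb{P}(A_n\cap B_n),$$ where $A_n$ is the event $$\left| \left(\mathcal{C}_{11}^{n,\boldsymbol{\Sigma}}\right)^{-1}W_n(1) \right| < \sqrt{n}\left( \left|\boldsymbol{\beta}_1^\star\right| - \frac{\lambda}{2n}\left|\left(\mathcal{C}_{11}^{n,\boldsymbol{\Sigma}}\right)^{-1}\mathrm{sign}(\boldsymbol{\beta}_1^\star)\right| - \frac{\eta}{n}\left|\left(\mathcal{C}_{11}^{n,\boldsymbol{\Sigma}}\right)^{-1}\boldsymbol{\Sigma}_{11}\boldsymbol{\beta}_1^\star\right|\right)$$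 and $B_n$ is the event $$\left|\mathcal{C}_{21}^{n,\boldsymbol{\Sigma}}\left(\mathcal{C}_{11}^{n,\boldsymbol{\Sigma}}\right)^{-1}W_n(1)-W_n(2)\right| \leq \frac{\lambda}{2\sqrt{n}} -\frac{\lambda}{2\sqrt{n}}\left| \mathcal{C}_{21}^{n,\boldsymbol{\Sigma}}\left(\mathcal{C}_{11}^{n,\boldsymbol{\Sigma}}\right)^{-1}\left(\mathrm{sign}(\boldsymbol{\beta}_1^\star) +\frac{2\eta}{\lambda} \boldsymbol{\Sigma}_{11}\boldsymbol{\beta}_1^\star \right)-\frac{2\eta}{\lambda}\boldsymbol{\Sigma}_{21}\boldsymbol{\beta}_1^\star \right|,$$ all absolute values and inequalities between vectors being understood componentwise.
   Context: Notation: $\boldsymbol{\Sigma}=\boldsymbol{U}\boldsymbol{D}\boldsymbol{U}'$ is the spectral decomposition, $\boldsymbol{\Sigma}^{1/2}=\boldsymbol{U}\boldsymbol{D}^{1/2}\boldsymbol{U}'$, $\boldsymbol{\Sigma}^{-1/2}=\boldsymbol{U}\boldsymbol{D}^{-1/2}\boldsymbol{U}'$, and $\widetilde{\mathbf{X}}=\mathbf{X}\boldsymbol{\Sigma}^{-1/2}$. The generalized Elastic Net (gEN) estimator is $\widehat{\boldsymbol{\beta}}=\boldsymbol{\Sigma}^{-1/2}\widehat{\widetilde{\boldsymbol{\beta}}}$, where $\widehat{\widetilde{\boldsymbol{\beta}}}$ is the (unique) minimizer over $\widetilde{\boldsymbol{\beta}}\in\mathbb{R}^p$ of $$\|\mathbf{y}-\widetilde{\mathbf{X}}\widetilde{\boldsymbol{\beta}}\|_2^2+\lambda\|\boldsymbol{\Sigma}^{-1/2}\widetilde{\boldsymbol{\beta}}\|_1+\eta\|\widetilde{\boldsymbol{\beta}}\|_2^2.$$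 $\mathbf{X}_1$ (resp. $\mathbf{X}_2$) denotes the first $q$ (resp. last $p-q$) columns of $\mathbf{X}$; $C_n=n^{-1}\mathbf{X}'\mathbf{X}$ with blocks $C_{ij}^n=n^{-1}\mathbf{X}_i'\mathbf{X}_j$; $\boldsymbol{\Sigma}_{ij}$ are the corresponding blocks of $\boldsymbol{\Sigma}$ ($\boldsymbol{\Sigma}_{11}$ is $q\times q$). Define $\mathcal{C}_{11}^{n,\boldsymbol{\Sigma}}=C_{11}^n+\frac{\eta}{n}\boldsymbol{\Sigma}_{11}$, $\mathcal{C}_{21}^{n,\boldsymbol{\Sigma}}=C_{21}^n+\frac{\eta}{n}\boldsymbol{\Sigma}_{21}$, $W_n(1)=n^{-1/2}\mathbf{X}_1'\boldsymbol{\epsilon}$, $W_n(2)=n^{-1/2}\mathbf{X}_2'\boldsymbol{\epsilon}$. $\mathrm{sign}(x)=1,-1,0$ for $x>0,x<0,x=0$, applied componentwise. *)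

(* Defs.v *)
From HB Require Import structures.
From mathcomp Require Import all_boot all_order all_algebra.
From mathcomp Require Import all_classical all_reals all_analysis.
Set Implicit Arguments. Unset Strict Implicit. Unset Printing Implicit Defensive.
Import Order.TTheory GRing.Theory Num.Theory.
Local Open Scope classical_set_scope.
Local Open Scope ring_scope.

Section Defs.
Context {R : realType}.

Definition sqnorm2 {m : nat} (v : 'cV[R]_m) : R := \sum_(i < m) v i 0 ^+ 2.
Definition norm1 {m : nat} (v : 'cV[R]_m) : R := \sum_(i < m) `|v i 0|.

Definition sgnv {m : nat} (v : 'cV[R]_m) : 'cV[R]_m := map_mx Num.sg v.

Definition sym_posdef {m : nat} (S : 'M[R]_m) : Prop :=
  S^T = S /\ forall v : 'cV[R]_m, v != 0 -> 0 < (v^T *m S *m v) 0 0.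

(* Sm is Sigma^{-1/2} := U D^{-1/2} U' for a spectral decomposition
   Sigma = U D U' (U orthogonal, D diagonal with positive entries). *)
Definition is_Sigma_mhalf {m : nat} (S Sm : 'M[R]_m) : Prop :=
  exists (U : 'M[R]_m) (d : 'rV[R]_m),
    [/\ U^T *m U = 1%:M, (forall i, 0 < d 0 i),
        S = U *m diag_mx d *m U^T &
        Sm = U *m diag_mx (map_mx (fun x => (Num.sqrt x)^-1) d) *m U^T].

(* objective of the transformed problem, in btilde *)
Definition gEN_obj {n p : nat} (X : 'M[R]_(n, p)) (y : 'cV[R]_n) (Sm : 'M[R]_p)
  (lambda eta : R) (bt : 'cV[R]_p) : R :=
  sqnorm2 (y - (X *m Sm) *m bt) + lambda * norm1 (Sm *m bt) + eta * sqnorm2 bt.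

Definition gEN_tilde {n p : nat} (X : 'M[R]_(n, p)) (y : 'cV[R]_n) (Sm : 'M[R]_p)
  (lambda eta : R) : 'cV[R]_p :=
  xget 0 [set bt | forall b, gEN_obj X y Sm lambda eta bt <= gEN_obj X y Sm lambda eta b].

Definition gEN {n p : nat} (X : 'M[R]_(n, p)) (y : 'cV[R]_n) (Sm : 'M[R]_p)
  (lambda eta : R) : 'cV[R]_p := Sm *m gEN_tilde X y Sm lambda eta.


Section Events.
Variables (n q r : nat) (X : 'M[R]_(n, q + r)) (eps : 'cV[R]_n)
  (Sigma : 'M[R]_(q + r)) (b1 : 'cV[R]_q) (lambda eta : R).

Definition X1 : 'M[R]_(n, q) := lsubmx X.
Definition X2 : 'M[R]_(n, r) := rsubmx X.
Definition Sig11 : 'M[R]_q := ulsubmx Sigma.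
Definition Sig21 : 'M[R]_(r, q) := dlsubmx Sigma.
Definition nR : R := n%:R.
Definition Cn11 : 'M[R]_q := nR^-1 *: (X1^T *m X1).
Definition Cn21 : 'M[R]_(r, q) := nR^-1 *: (X2^T *m X1).
Definition CS11 : 'M[R]_q := Cn11 + (eta / nR) *: Sig11.
Definition CS21 : 'M[R]_(r, q) := Cn21 + (eta / nR) *: Sig21.
Definition Wn1 : 'cV[R]_q := (Num.sqrt nR)^-1 *: (X1^T *m eps).
Definition Wn2 : 'cV[R]_r := (Num.sqrt nR)^-1 *: (X2^T *m eps).

Definition eventA : Prop :=
  forall i : 'I_q,
    `|(invmx CS11 *m Wn1) i 0| <
    Num.sqrt nR * (`|b1 i 0|
                   - lambda / (2 * nR) * `|(invmx CS11 *m sgnv b1) i 0|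
                   - eta / nR * `|(invmx CS11 *m Sig11 *m b1) i 0|).

Definition eventB : Prop :=
  forall j : 'I_r,
    `|(CS21 *m invmx CS11 *m Wn1 - Wn2) j 0| <=
    lambda / (2 * Num.sqrt nR)
    - lambda / (2 * Num.sqrt nR) *
      `|(CS21 *m invmx CS11 *m (sgnv b1 + (2 * eta / lambda) *: (Sig11 *m b1))
         - (2 * eta / lambda) *: (Sig21 *m b1)) j 0|.
End Events.

Section Prob.
Context {d : measure_display} {Omega : measurableType d} (P : probability Omega R).

(* V (given by its coordinates) is a random vector with law N(0, S):
   measurable coordinates, and every nontrivial linear combination u'V is
   a centered real normal with variance u' S u. *)
Definition gaussian_vec {m : nat} (V : 'I_m -> Omega -> R) (S : 'M[R]_m) : Prop :=
  (forall j, measurable_fun setT (V j)) /\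
  forall u : 'cV[R]_m, u != 0 ->
    forall B : set R, measurable B ->
      P ((fun w => \sum_(j < m) u j 0 * V j w) @^-1` B) =
      normal_prob 0 (Num.sqrt ((u^T *m S *m u) 0 0)) B.

Definition vec_event {J : finType} (V : J -> Omega -> R) (B : J -> set R) : set Omega :=
  [set w | forall j, B j (V j w)].

Definition mutually_indep {I J : finType} (V : I -> J -> Omega -> R) : Prop :=
  forall B : I -> J -> set R, (forall i j, measurable (B i j)) ->
    P [set w | forall i, vec_event (V i) (B i) w] =
    (\prod_(i : I) P (vec_event (V i) (B i)))%E.

Definition indep2 {J1 J2 : finType} (V1 : J1 -> Omega -> R) (V2 : J2 -> Omega -> R) : Prop :=
  forall (B1 : J1 -> set R) (B2 : J2 -> set R),
    (forall j, measurable (B1 j)) -> (forall j, measurable (B2 j)) ->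
    P (vec_event V1 B1 `&` vec_event V2 B2) =
    (P (vec_event V1 B1) * P (vec_event V2 B2))%E.

End Prob.
End Defs.

(* Main.v *)
Require Import Defs.
From HB Require Import structures.
From mathcomp Require Import all_boot all_order all_algebra.
From mathcomp Require Import all_classical all_reals all_analysis.
From mathcomp Require Import measurable_realfun.
From mathcomp Require Import ring lra.
Import Order.TTheory GRing.Theory Num.Theory.
Local Open Scope classical_set_scope.
Local Open Scope ring_scope.
Set Implicit Arguments. Unset Strict Implicit.

Section Bil.
Variable R : realFieldType.
Definition bl {m} (a b : 'cV[R]_m) : R := (a^T *m b) 0 0.

Lemma blE m (a b : 'cV[R]_m) : bl a b = \sum_i a i 0 * b i 0.
Proof. by rewrite /bl !mxE; apply: eq_bigr => i _; rewrite mxE. Qed.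
Lemma blC m (a b : 'cV[R]_m) : bl a b = bl b a.
Proof. by rewrite !blE; apply: eq_bigr => i _; rewrite mulrC. Qed.
Lemma blDl m (a b c : 'cV[R]_m) : bl (a + b) c = bl a c + bl b c.
Proof. by rewrite !blE -big_split; apply: eq_bigr => i _; rewrite mxE mulrDl. Qed.
Lemma blDr m (a b c : 'cV[R]_m) : bl c (a + b) = bl c a + bl c b.
Proof. by rewrite blC blDl !(blC c). Qed.
Lemma blNl m (a c : 'cV[R]_m) : bl (- a) c = - bl a c.
Proof. by rewrite !blE -sumrN; apply: eq_bigr => i _; rewrite mxE mulNr. Qed.
Lemma blNr m (a c : 'cV[R]_m) : bl c (- a) = - bl c a.
Proof. by rewrite blC blNl blC. Qed.
Lemma blZl m (t : R) (a c : 'cV[R]_m) : bl (t *: a) c = t * bl a c.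
Proof. by rewrite !blE mulr_sumr; apply: eq_bigr => i _; rewrite mxE mulrA. Qed.
Lemma blZr m (t : R) (a c : 'cV[R]_m) : bl c (t *: a) = t * bl c a.
Proof. by rewrite blC blZl blC. Qed.
Lemma bl_mul m k (A : 'M[R]_(k, m)) (a : 'cV[R]_m) (b : 'cV[R]_k) :
  bl (A *m a) b = bl a (A^T *m b).
Proof. by rewrite /bl trmx_mul mulmxA. Qed.
Lemma bl0l m (c : 'cV[R]_m) : bl 0 c = 0.
Proof. by rewrite blE big1 // => i _; rewrite mxE mul0r. Qed.
Lemma bl_ge0 m (a : 'cV[R]_m) : 0 <= bl a a.
Proof. by rewrite blE sumr_ge0 // => i _; rewrite -expr2 sqr_ge0. Qed.
Lemma bl_eq0 m (a : 'cV[R]_m) : bl a a = 0 -> a = 0.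
Proof.
rewrite blE => /eqP; rewrite psumr_eq0 => [/allP H|i _]; last by rewrite -expr2 sqr_ge0.
apply/matrixP => i j; rewrite (ord1 j) mxE.
by have := H i (mem_index_enum _); rewrite /= -expr2 sqrf_eq0 => /eqP.
Qed.
End Bil.

Section RealLemmas.
Variable R : realFieldType.

Lemma norm_near (c t : R) : c != 0 -> `|t| < `|c| -> `|c + t| = `|c| + Num.sg c * t.
Proof.
move=> c0; rewrite ltr_norml => /andP[h1 h2].
case: (ltgtP c 0) => [cn|cp|ce]; last by rewrite ce eqxx in c0.
- rewrite (ltr0_sg cn) (ltr0_norm cn) in h1 h2 *.
  rewrite ltr0_norm; first by rewrite opprD; lra.
  lra.
- rewrite (gtr0_sg cp) (gtr0_norm cp) in h1 h2 *.
  rewrite gtr0_norm; first by lra.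
  lra.
Qed.

Lemma RL1 (c g Q lam : R) : c != 0 -> 0 <= Q ->
  (forall t, 0 <= 2 * (t * g) + t ^+ 2 * Q + lam * (`|c + t| - `|c|)) ->
  2 * g = - lam * Num.sg c.
Proof.
move=> c0 Q0 H; apply/eqP; rewrite -subr_eq0; set a := 2 * g - _.
apply/negPn/negP => a0.
have cp : 0 < `|c| by rewrite normr_gt0.
have ap : 0 < `|a| by rewrite normr_gt0.
set D := 2 * (`|a| + `|c| * (Q + 1)).
have Dp : 0 < D by rewrite /D; apply: mulr_gt0 => //; apply: addr_gt0 => //; apply: mulr_gt0 => //; lra.
set e := `|c| / D.
have ep : 0 < e by rewrite /e divr_gt0.
have eD : e * D = `|c| by rewrite /e mulfVK // gt_eqF.
have cQ : 0 < `|c| * (Q + 1) by apply: mulr_gt0 => //; lra.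
have e1 : e * `|a| < `|c|.
  rewrite -eD; rewrite ltr_pM2l //; rewrite /D; lra.
have e2 : e * Q < 1.
  have ea : 0 <= e * `|a| by apply: mulr_ge0; lra.
  have h' : `|c| * (2 * e * (Q + 1)) <= `|c| * 1.
    move: eD; rewrite /D; clearbody a e D; move=> eD; lra.
  move: h'; rewrite ler_pM2l // => h''. lra.
have := H (- a * e).
have tn : `|- a * e| < `|c| by rewrite normrM normrN (gtr0_norm ep) mulrC.
rewrite (norm_near c0 tn).
have -> : `|c| + Num.sg c * (- a * e) - `|c| = Num.sg c * (- a * e) by ring.
have aa : a * a = `|a| * `|a| by rewrite -normrM ger0_norm // -expr2 sqr_ge0.
have haa : 0 < a * a by rewrite aa mulr_gt0.
have -> : 2 * (- a * e * g) + (- a * e) ^+ 2 * Q + lam * (Num.sg c * (- a * e))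
   = - (a * e) * (2 * g - - lam * Num.sg c) + (a * a) * (e * e * Q) by ring.
rewrite -/a.
have -> : - (a * e) * a + a * a * (e * e * Q) = (a * a) * e * (e * Q - 1) by ring.
move=> h; have : (a * a) * e * (e * Q - 1) < 0.
  rewrite pmulr_rlt0; first by lra.
  by rewrite mulr_gt0.
lra.
Qed.

Lemma RL2 (c g Q lam : R) : c = 0 -> 0 < lam -> 0 <= Q ->
  (forall t, 0 <= 2 * (t * g) + t ^+ 2 * Q + lam * (`|c + t| - `|c|)) ->
  `|2 * g| <= lam.
Proof.
move=> -> lp Q0 H; rewrite leNgt; apply/negP => bl.
set b := 2 * g in bl.
have b0 : b != 0 by rewrite -normr_gt0; lra.
set e := (`|b| - lam) / (2 * (Q + 1)).
have Dp : 0 < 2 * (Q + 1) by lra.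
have ep : 0 < e by rewrite /e divr_gt0 //; lra.
have eD : e * (2 * (Q + 1)) = `|b| - lam by rewrite /e mulfVK // gt_eqF.
have := H (- Num.sg b * e).
rewrite add0r normr0 subr0 normrM normrN normr_sg b0 mul1r (gtr0_norm ep).
have hs : Num.sg b * b = `|b| by rewrite -normrEsg.
have hs2 : Num.sg b ^+ 2 = 1 by case: (ltgtP b 0) b0 => [h|h|->] _ //; rewrite ?(ltr0_sg h) ?(gtr0_sg h) expr2 ?mulN1r ?opprK ?mulr1.
have -> : 2 * (- Num.sg b * e * g) + (- Num.sg b * e) ^+ 2 * Q + lam * e
  = - e * (Num.sg b * b) + (Num.sg b ^+ 2) * (e * e * Q) + lam * e by rewrite /b; ring.
rewrite hs hs2 mul1r => h.
nra.
Qed.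

End RealLemmas.

Section Opt.
Variables (R : realFieldType) (n p : nat) (X : 'M[R]_(n, p)) (y : 'cV[R]_n)
  (S : 'M[R]_p) (lam eta : R).
Hypotheses (hS : S^T = S) (hPD : forall v : 'cV[R]_p, v != 0 -> 0 < (v^T *m S *m v) 0 0)
  (hlam : 0 < lam) (heta : 0 < eta).

Definition sq2 {m} (v : 'cV[R]_m) : R := \sum_(i < m) v i 0 ^+ 2.
Definition n1 {m} (v : 'cV[R]_m) : R := \sum_(i < m) `|v i 0|.
Definition fobj (b : 'cV[R]_p) : R :=
  sq2 (y - X *m b) + lam * n1 b + eta * (b^T *m S *m b) 0 0.
Definition gr (b : 'cV[R]_p) : 'cV[R]_p := X^T *m (X *m b - y) + eta *: (S *m b).
Definition Qf (v : 'cV[R]_p) : R := bl (X *m v) (X *m v) + eta * bl v (S *m v).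
Definition KKT (b : 'cV[R]_p) : Prop := forall i,
  (b i 0 != 0 -> 2 * gr b i 0 = - lam * Num.sg (b i 0)) /\
  (b i 0 = 0 -> `|2 * gr b i 0| <= lam).

Lemma sq2E m (v : 'cV[R]_m) : sq2 v = bl v v.
Proof. by rewrite blE; apply: eq_bigr => i _; rewrite expr2. Qed.
Lemma quadE (b : 'cV[R]_p) : (b^T *m S *m b) 0 0 = bl b (S *m b).
Proof. by rewrite /bl mulmxA. Qed.

Lemma fobj_expand b v : fobj (b + v) =
  fobj b + 2 * bl v (gr b) + Qf v + lam * (n1 (b + v) - n1 b).
Proof.
rewrite /fobj /Qf /gr !sq2E !quadE.
set e := y - X *m b.
have -> : y - X *m (b + v) = e - X *m v by rewrite /e mulmxDr opprD addrA.
have hXb : X *m b - y = - e by rewrite /e opprB.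
rewrite hXb mulmxDr !(blDl, blDr, blNl, blNr, blZr) -bl_mul blNr.
rewrite /e blDr blNr (blC y (X *m v)) (blC (X *m b) (X *m v)) (blC b (S *m v)) (bl_mul S v b) hS.
ring.
Qed.

Lemma Qf_ge0 v : 0 <= Qf v.
Proof.
rewrite /Qf; apply: addr_ge0; first exact: bl_ge0.
have [->|v0] := eqVneq v 0; first by rewrite bl0l mulr0.
by apply: mulr_ge0; [exact: ltW| rewrite -quadE; apply: ltW; exact: hPD].
Qed.

Lemma Qf_gt0 v : v != 0 -> 0 < Qf v.
Proof.
move=> v0; rewrite /Qf; apply: ltr_pwDr; first by apply: mulr_gt0 => //; rewrite -quadE; exact: hPD.
exact: bl_ge0.
Qed.

Lemma term_ge0 (c g v : R) : (c != 0 -> 2 * g = - lam * Num.sg c) ->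
  (c = 0 -> `|2 * g| <= lam) -> 0 <= 2 * (v * g) + lam * (`|c + v| - `|c|).
Proof.
move=> h1 h2; have [c0|c0] := eqVneq c 0.
  move: (h2 c0); rewrite c0 add0r normr0 subr0 => h.
  have : - (v * (2 * g)) <= `|v| * `|2 * g| by rewrite -normrM -normrN ler_norm.
  have : 0 <= `|v| by [].
  move=> h3 h4; nra.
have -> : 2 * (v * g) = v * (2 * g) by ring.
rewrite (h1 c0).
have hsg : Num.sg c * (c + v) <= `|c + v|.
  apply: le_trans (ler_norm _) _; rewrite normrM normr_sg c0 mul1r //.
have hc : `|c| = Num.sg c * c by rewrite normrEsg.
rewrite hc; move: hsg; rewrite mulrDr => hsg.
have -> : v * (- lam * Num.sg c) + lam * (`|c + v| - Num.sg c * c) =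
          lam * (`|c + v| - (Num.sg c * c + Num.sg c * v)) by ring.
apply: mulr_ge0; [exact: ltW | lra].
Qed.

Lemma KKT_diff c v : KKT c -> 0 <= 2 * bl v (gr c) + lam * (n1 (c + v) - n1 c).
Proof.
move=> hK; rewrite blE /n1 -sumrB mulr_sumr mulr_sumr -big_split /=.
apply: sumr_ge0 => i _; rewrite [(c + v) i 0]mxE; have [h1 h2] := hK i.
exact: term_ge0.
Qed.

Lemma KKT_min c b : KKT c -> fobj c + Qf (b - c) <= fobj b.
Proof.
move=> hK; have e := fobj_expand c (b - c).
have h := KKT_diff (b - c) hK.
have hb : c + (b - c) = b by rewrite addrC subrK.
rewrite hb in e h; rewrite e; lra.
Qed.

Lemma KKT_unique c b : KKT c -> fobj b <= fobj c -> b = c.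
Proof.
move=> hK hb; have := KKT_min b hK => h.
have : Qf (b - c) <= 0 by lra.
have [/eqP|bc] := eqVneq (b - c) 0; first by rewrite subr_eq0 => /eqP.
have hq := Qf_gt0 bc. move=> h2. move: (lt_le_trans hq h2). by rewrite ltxx.
Qed.

Definition ev (i : 'I_p) : 'cV[R]_p := delta_mx i 0.

Lemma bl_ev i (w : 'cV[R]_p) : bl (ev i) w = w i 0.
Proof.
rewrite blE (bigD1 i) //= big1 => [|k hk]; first by rewrite !mxE !eqxx mul1r addr0.
by rewrite !mxE (negbTE hk) mul0r.
Qed.

Lemma n1_ev c i t : n1 (c + t *: ev i) - n1 c = `|c i 0 + t| - `|c i 0|.
Proof.
rewrite /n1 (bigD1 i) //= [X in _ - X](bigD1 i) //=.
rewrite !mxE !eqxx mulr1.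
have -> : \sum_(k < p | k != i) `|(c + t *: ev i) k 0| = \sum_(k < p | k != i) `|c k 0|.
  by apply: eq_bigr => k hk; rewrite !mxE (negbTE hk) mulr0 addr0.
ring.
Qed.

Lemma Qf_ev t i : Qf (t *: ev i) = t ^+ 2 * Qf (ev i).
Proof.
by rewrite /Qf -scalemxAr -scalemxAr !(blZl, blZr); ring.
Qed.

Lemma min_KKT c : (forall b, fobj c <= fobj b) -> KKT c.
Proof.
move=> hm i.
have H : forall t, 0 <= 2 * (t * gr c i 0) + t ^+ 2 * Qf (ev i) + lam * (`|c i 0 + t| - `|c i 0|).
  move=> t; have := hm (c + t *: ev i); rewrite fobj_expand blZl bl_ev Qf_ev n1_ev; lra.
split => hc.
- exact: (RL1 hc (Qf_ge0 _) H).
- exact: (RL2 hc hlam (Qf_ge0 _) H).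
Qed.

End Opt.


Section SmFacts.
Variables (R : realType) (p : nat) (Sigma Sm : 'M[R]_p).
Hypothesis hSm : is_Sigma_mhalf Sigma Sm.

Lemma Sm_prop : Sm^T *m Sigma *m Sm = 1%:M.
Proof.
case: hSm => U [d [hU hd hS ->]]; rewrite hS.
set Di := diag_mx _.
have hU' : U *m U^T = 1%:M by apply: mulmx1C.
rewrite !trmx_mul trmxK tr_diag_mx -/Di.
have e : Di *m diag_mx d *m Di = 1%:M.
  rewrite /Di !mulmx_diag -diag_const_mx; congr diag_mx; apply/matrixP => i j.
  rewrite !mxE.
  have d0 : 0 <= d 0 j by apply: ltW.
  have s0 : Num.sqrt (d 0 j) != 0 by rewrite sqrtr_eq0 -ltNge.
  rewrite -{2}(sqr_sqrtr d0) expr2; field; exact: s0.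
rewrite -!mulmxA.
rewrite (mulmxA U^T U) hU mul1mx (mulmxA U^T U) hU mul1mx.
by rewrite (mulmxA Di) (mulmxA (Di *m diag_mx d)) e mul1mx hU'.
Qed.

Definition Hm : 'M[R]_p := Sm^T *m Sigma.
Lemma Sm_Hm : Sm *m Hm = 1%:M.
Proof. by apply: mulmx1C; rewrite /Hm Sm_prop. Qed.

Lemma obj_eq n (X : 'M[R]_(n, p)) y lam eta bt :
  gEN_obj X y Sm lam eta bt = fobj X y Sigma lam eta (Sm *m bt).
Proof.
rewrite /gEN_obj /fobj -mulmxA; congr (_ + _ * _).
rewrite trmx_mul !mulmxA -(mulmxA _ Sm^T) -(mulmxA _ (Sm^T *m Sigma)) Sm_prop mulmx1.
by have := sq2E bt; rewrite /sq2 /bl.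
Qed.

Section GEN.
Variables (n : nat) (X : 'M[R]_(n, p)) (y : 'cV[R]_n) (lam eta : R).
Hypotheses (hS : Sigma^T = Sigma)
  (hPD : forall v : 'cV[R]_p, v != 0 -> 0 < (v^T *m Sigma *m v) 0 0)
  (hlam : 0 < lam) (heta : 0 < eta).

Lemma gEN_KKT c : KKT X y Sigma lam eta c -> gEN X y Sm lam eta = c.
Proof.
move=> hK; rewrite /gEN /gEN_tilde.
set P := [set bt | _].
have hP : P (Hm *m c).
  move=> b; rewrite !obj_eq mulmxA Sm_Hm mul1mx.
  by have := KKT_min hS hlam (Sm *m b) hK; have := Qf_ge0 X hPD heta (Sm *m b - c); lra.
have := xgetPex 0 (ex_intro _ _ hP) (Hm *m c).
rewrite !obj_eq mulmxA Sm_Hm mul1mx => h.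
exact: (KKT_unique hS hPD hlam heta hK h).
Qed.

Lemma gEN_min : gEN X y Sm lam eta != 0 ->
  forall b, fobj X y Sigma lam eta (gEN X y Sm lam eta) <= fobj X y Sigma lam eta b.
Proof.
rewrite /gEN /gEN_tilde; set P := [set bt | _].
case: (xgetP 0 P) => [bt _ hbt|hn]; last by rewrite mulmx0 eqxx.
move=> _ b; have := hbt (Hm *m b); rewrite !obj_eq mulmxA Sm_Hm mul1mx //.
Qed.
End GEN.
End SmFacts.

Lemma sg_of_pos (R : realDomainType) (a b : R) : 0 < a * b -> Num.sg a = Num.sg b.
Proof.
case: (ltgtP a 0) => ha; case: (ltgtP b 0) => hb; rewrite ?(ltr0_sg ha) ?(gtr0_sg ha) ?(ltr0_sg hb) ?(gtr0_sg hb) //;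
  rewrite ?ha ?hb ?mul0r ?mulr0 ?ltxx //; nra.
Qed.

Lemma pos_of_sg (R : realDomainType) (a b : R) : b != 0 -> Num.sg a = Num.sg b -> 0 < a * b.
Proof.
move=> b0; case: (ltgtP b 0) b0 => hb // _; rewrite ?(ltr0_sg hb) ?(gtr0_sg hb).
- move/eqP; rewrite sgr_cp0 => ha; nra.
- move/eqP; rewrite sgr_cp0 => ha; nra.
Qed.

Lemma bl_col (R : realFieldType) m1 m2 (a c : 'cV[R]_m1) (b d : 'cV[R]_m2) :
  bl (col_mx a b) (col_mx c d) = bl a c + bl b d.
Proof. by rewrite /bl tr_col_mx mul_row_col mxE. Qed.

Lemma sgnvE (R : realType) m (v : 'cV[R]_m) i j : sgnv v i j = Num.sg (v i j).
Proof. by rewrite mxE. Qed.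

Section Block.
Variables (R : realType) (n q r : nat) (X : 'M[R]_(n, q + r)) (y : 'cV[R]_n)
  (Sigma Sm : 'M[R]_(q + r)) (b1 : 'cV[R]_q) (lam eta : R).
Hypotheses (hSm : is_Sigma_mhalf Sigma Sm) (hS : Sigma^T = Sigma)
  (hPD : forall v : 'cV[R]_(q + r), v != 0 -> 0 < (v^T *m Sigma *m v) 0 0)
  (hlam : 0 < lam) (heta : 0 < eta) (hb1 : forall i, b1 i 0 != 0) (hq : (0 < q)%N).

Definition M11 : 'M[R]_q := (lsubmx X)^T *m lsubmx X + eta *: ulsubmx Sigma.
Definition cc1 : 'cV[R]_q := invmx M11 *m ((lsubmx X)^T *m y - (lam / 2) *: sgnv b1).
Definition GG1 (v : 'cV[R]_q) : 'cV[R]_q :=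
  (lsubmx X)^T *m (lsubmx X *m v - y) + eta *: (ulsubmx Sigma *m v).
Definition GG2 (v : 'cV[R]_q) : 'cV[R]_r :=
  (rsubmx X)^T *m (lsubmx X *m v - y) + eta *: (dlsubmx Sigma *m v).
Definition Kc : Prop :=
  (forall i, 0 < cc1 i 0 * b1 i 0) /\ (forall j, `|2 * GG2 cc1 j 0| <= lam).

Lemma gr_col v : gr X y Sigma eta (col_mx v 0) = col_mx (GG1 v) (GG2 v).
Proof.
rewrite /gr /GG1 /GG2.
have hX : X *m col_mx v 0 = lsubmx X *m v by rewrite -{1}[X]hsubmxK mul_row_col mulmx0 addr0.
have hSig : Sigma *m col_mx v 0 = col_mx (ulsubmx Sigma *m v) (dlsubmx Sigma *m v).
  by rewrite -{1}[Sigma]submxK mul_block_col !mulmx0 !addr0.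
by rewrite hX hSig -{1}[X]hsubmxK tr_row_mx mul_col_mx scale_col_mx add_col_mx.
Qed.

Lemma Sig11_sym : (ulsubmx Sigma)^T = ulsubmx Sigma.
Proof. by rewrite trmx_ulsub hS. Qed.

Lemma M11_unit : M11 \in unitmx.
Proof.
rewrite -row_free_unit; apply: inj_row_free => v hv.
set u := v^T.
have hM : M11^T = M11 by rewrite /M11 linearD /= linearZ /= trmx_mul trmxK Sig11_sym.
have hu : M11 *m u = 0 by rewrite /u -hM -trmx_mul hv trmx0.
have hb : bl u (M11 *m u) = 0 by rewrite hu /bl mulmx0 mxE.
have [u0|u0] := eqVneq u 0; first by rewrite -[v]trmxK -/u u0 trmx0.
exfalso.
have w0 : col_mx u (0 : 'cV[R]_r) != 0 by rewrite col_mx_eq0 negb_and u0.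
have := hPD w0; rewrite quadE.
rewrite -{1}[Sigma]submxK mul_block_col !mulmx0 !addr0 bl_col bl0l addr0.
move: hb; rewrite /M11 mulmxDl blDr -mulmxA -bl_mul -scalemxAl blZr => hb h.
have := bl_ge0 (lsubmx X *m u).
have : 0 < eta * bl u (ulsubmx Sigma *m u) by apply: mulr_gt0.
lra.
Qed.

Lemma G1_eq v : GG1 v = M11 *m v - (lsubmx X)^T *m y.
Proof. by rewrite /GG1 /M11 mulmxBr mulmxDl mulmxA -scalemxAl; rewrite addrAC. Qed.


Lemma cc1_G1 : GG1 cc1 = - (lam / 2) *: sgnv b1.
Proof.
rewrite G1_eq /cc1 mulmxA mulmxV ?M11_unit // mul1mx.
by rewrite addrAC subrr add0r scaleNr.
Qed.

Lemma split_cases (P : 'I_(q + r) -> Prop) :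
  (forall k, P (lshift r k)) -> (forall k, P (rshift q k)) -> forall i, P i.
Proof.
move=> h1 h2 i; case: (splitP i) => k hk.
- by have -> : i = lshift r k by apply/val_inj.
- by have -> : i = rshift q k by apply/val_inj.
Qed.

Lemma K_S : Kc -> sgnv (gEN X y Sm lam eta) = sgnv (col_mx b1 0).
Proof.
case=> hK1 hK2.
have hsg k : Num.sg (cc1 k 0) = Num.sg (b1 k 0) by apply: sg_of_pos.
have hKKT : KKT X y Sigma lam eta (col_mx cc1 0).
  rewrite /KKT gr_col; apply: split_cases => k /=; rewrite ?col_mxEu ?col_mxEd.
  - split => h.
      by rewrite hsg cc1_G1 !mxE; field.
    by move: (hK1 k); rewrite h mul0r ltxx.
  - by split => [|_]; [rewrite mxE eqxx | exact: hK2].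
rewrite (@gEN_KKT _ _ _ _ hSm _ X y lam eta hS hPD hlam heta _ hKKT).
apply/matrixP => i j; rewrite (ord1 j) !sgnvE; move: i; apply: split_cases => k /=.
- by rewrite !col_mxEu.
- by rewrite !col_mxEd mxE.
Qed.

Lemma S_K : sgnv (gEN X y Sm lam eta) = sgnv (col_mx b1 0) -> Kc.
Proof.
move=> hsgn.
set bh := gEN X y Sm lam eta in hsgn.
have bh0 : bh != 0.
  apply/eqP => h0; move: hsgn; rewrite h0 => /matrixP /(_ (lshift r (Ordinal hq)) 0).
  rewrite !sgnvE col_mxEu mxE sgr0 => /esym /eqP; rewrite sgr_eq0.
  by move/negP: (hb1 (Ordinal hq)).
have hK : KKT X y Sigma lam eta bh.
  exact: (min_KKT hS hPD hlam heta (@gEN_min _ _ _ _ hSm _ X y lam eta bh0)).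
clearbody bh.
have hent i : Num.sg (bh i 0) = Num.sg (col_mx b1 0 i 0).
  by move/matrixP: hsgn => /(_ i 0); rewrite !sgnvE.
have hd : dsubmx bh = 0.
  apply/matrixP => k j; rewrite (ord1 j) mxE [RHS]mxE.
  have := hent (rshift q k); rewrite col_mxEd mxE sgr0.
  by move/eqP; rewrite sgr_eq0 => /eqP.
have hbh : bh = col_mx (usubmx bh) 0 by rewrite -hd vsubmxK.
set b1h := usubmx bh in hbh.
have hs1 k : Num.sg (b1h k 0) = Num.sg (b1 k 0).
  by have := hent (lshift r k); rewrite hbh !col_mxEu.
have hG : GG1 b1h = - (lam / 2) *: sgnv b1.
  apply/matrixP => k j; rewrite (ord1 j).
  have := hK (lshift r k); rewrite hbh gr_col !col_mxEu => -[h1 _].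
  have hnz : b1h k 0 != 0 by rewrite -sgr_eq0 hs1 sgr_eq0 hb1.
  move: (h1 hnz); rewrite hs1 => h.
  rewrite [RHS]mxE sgnvE.
  have -> : GG1 b1h k 0 = (2 * GG1 b1h k 0) / 2 by field.
  by rewrite h; field.
have hc : b1h = cc1.
  move: hG; rewrite G1_eq => /eqP; rewrite subr_eq => /eqP hM.
  rewrite /cc1 -[b1h](mulKmx M11_unit) hM; congr (_ *m _).
  by rewrite scaleNr addrC.
split => [k|j].
- by apply: pos_of_sg; [exact: hb1 | rewrite -hc hs1].
- have := hK (rshift q j); rewrite hbh gr_col !col_mxEd mxE -hc => -[_ h2].
  exact: h2.
Qed.
End Block.


Lemma entD (R : realType) m k (A B : 'M[R]_(m, k)) i j : (A + B) i j = A i j + B i j.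
Proof. by rewrite mxE. Qed.
Lemma entN (R : realType) m k (A : 'M[R]_(m, k)) i j : (- A) i j = - A i j.
Proof. by rewrite mxE. Qed.
Lemma entZ (R : realType) m k (a : R) (A : 'M[R]_(m, k)) i j : (a *: A) i j = a * A i j.
Proof. by rewrite mxE. Qed.

Lemma abs_bounds (R : realType) (x : R) : - `|x| <= x /\ x <= `|x|.
Proof. by split; [rewrite lerNl -normrN ler_norm | exact: ler_norm]. Qed.

Lemma near_pos (R : realType) (c b a s t rN k2 k3 : R) : 0 < rN -> 0 <= k2 -> 0 <= k3 ->
  c - b = rN^-1 * a - k2 * s - k3 * t ->
  `|a| < rN * (`|b| - k2 * `|s| - k3 * `|t|) -> 0 < c * b.
Proof.
move=> rp k2p k3p he ha.
have ha' : `|rN^-1 * a| < `|b| - k2 * `|s| - k3 * `|t|.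
  by rewrite normrM gtr0_norm ?invr_gt0 // ltr_pdivrMl.
have [a1 a2] := abs_bounds (rN^-1 * a).
have [s1 s2] := abs_bounds s.
have [t1 t2] := abs_bounds t.
have s3 : k2 * s <= k2 * `|s| by rewrite ler_wpM2l.
have s4 : - (k2 * `|s|) <= k2 * s by rewrite -mulrN ler_wpM2l.
have t3 : k3 * t <= k3 * `|t| by rewrite ler_wpM2l.
have t4 : - (k3 * `|t|) <= k3 * t by rewrite -mulrN ler_wpM2l.
case: (ltgtP b 0) => hb.
- rewrite (ltr0_norm hb) in ha'. have hc : c < 0 by lra. nra.
- rewrite (gtr0_norm hb) in ha'. have hc : 0 < c by lra. nra.
- rewrite hb normr0 in ha'.
  have : 0 <= k2 * `|s| by apply: mulr_ge0.
  have : 0 <= k3 * `|t| by apply: mulr_ge0.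
  have : 0 <= `|rN^-1 * a| by [].
  lra.
Qed.

Lemma B_bound (R : realType) (G t1 t2 rN lam : R) : 0 < rN -> 0 < lam ->
  G = rN * t1 - lam / 2 * t2 ->
  `|t1| <= lam / (2 * rN) - lam / (2 * rN) * `|t2| -> `|2 * G| <= lam.
Proof.
move=> rp lp -> h.
have h' : rN * `|t1| <= lam / 2 - lam / 2 * `|t2|.
  have e : rN * (lam / (2 * rN) - lam / (2 * rN) * `|t2|) = lam / 2 - lam / 2 * `|t2|.
    by field; rewrite gt_eqF.
  by rewrite -e ler_wpM2l // ltW.
have [a1 a2] := abs_bounds t1.
have [b1 b2] := abs_bounds t2.
have c1 : rN * t1 <= rN * `|t1| by rewrite ler_wpM2l // ltW.
have c2 : - (rN * `|t1|) <= rN * t1 by rewrite -mulrN ler_wpM2l // ltW.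
rewrite ler_norml; apply/andP; split; nra.
Qed.

Section Alg.
Variables (R : realType) (n q r : nat) (X : 'M[R]_(n, q + r)) (eps : 'cV[R]_n)
  (Sigma : 'M[R]_(q + r)) (b1 : 'cV[R]_q) (lam eta : R).
Hypotheses (hS : Sigma^T = Sigma)
  (hPD : forall v : 'cV[R]_(q + r), v != 0 -> 0 < (v^T *m Sigma *m v) 0 0)
  (hlam : 0 < lam) (heta : 0 < eta) (hn : (0 < n)%N).

Let y := X *m col_mx b1 0 + eps.
Let N : R := n%:R.
Let rN : R := Num.sqrt N.
Let Mi := invmx (M11 X Sigma eta).
Let M21 := (rsubmx X)^T *m lsubmx X + eta *: dlsubmx Sigma.

Lemma N_gt0 : 0 < N. Proof. by rewrite /N ltr0n. Qed.
Lemma rN_gt0 : 0 < rN. Proof. by rewrite /rN sqrtr_gt0 N_gt0. Qed.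
Lemma rN_sq : rN * rN = N. Proof. by rewrite -expr2 /rN sqr_sqrtr // ltW // N_gt0. Qed.

Lemma CS11E : CS11 X Sigma eta = N^-1 *: M11 X Sigma eta.
Proof. by rewrite /CS11 /Cn11 /M11 /X1 /Sig11 /nR scalerDr scalerA mulrC. Qed.
Lemma CS21E : CS21 X Sigma eta = N^-1 *: M21.
Proof. by rewrite /CS21 /Cn21 /M21 /X1 /X2 /Sig21 /nR scalerDr scalerA mulrC. Qed.
Lemma iCE : invmx (CS11 X Sigma eta) = N *: Mi.
Proof.
have hN : N^-1 \is a GRing.unit by rewrite unitfE invr_eq0 gt_eqF // N_gt0.
rewrite CS11E invmxZ ?unitmxZ // ?M11_unit // invrK //.
Qed.

Lemma Xcol (v : 'cV[R]_q) : X *m col_mx v 0 = lsubmx X *m v.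
Proof. by rewrite -{1}[X]hsubmxK mul_row_col mulmx0 addr0. Qed.

Lemma D1 : cc1 X y Sigma b1 lam eta = b1 + (Mi *m ((lsubmx X)^T *m eps)
   - (lam / 2) *: (Mi *m sgnv b1) - eta *: (Mi *m (ulsubmx Sigma *m b1))).
Proof.
rewrite /cc1 -/Mi /y Xcol.
have key : Mi *m ((lsubmx X)^T *m (lsubmx X *m b1)) = b1 - eta *: (Mi *m (ulsubmx Sigma *m b1)).
  have -> : (lsubmx X)^T *m (lsubmx X *m b1) = (M11 X Sigma eta - eta *: ulsubmx Sigma) *m b1.
    by rewrite mulmxA /M11 addrK.
  by rewrite mulmxBl mulmxBr mulmxA mulVmx ?M11_unit // mul1mx -!scalemxAl -scalemxAr.
rewrite !mulmxDr !mulmxN key -!scalemxAr.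
apply/matrixP => i j; rewrite !(entD, entN, entZ); ring.
Qed.

Lemma D1' : cc1 X y Sigma b1 lam eta - b1 =
  (Num.sqrt (nR n))^-1 *: (invmx (CS11 X Sigma eta) *m Wn1 X eps)
  - lam / (2 * nR n) *: (invmx (CS11 X Sigma eta) *m sgnv b1)
  - eta / nR n *: (invmx (CS11 X Sigma eta) *m Sig11 Sigma *m b1).
Proof.
rewrite D1 iCE /Wn1 /X1 /Sig11 /nR -/N -/rN.
rewrite addrAC subrr add0r.
rewrite -!scalemxAl -!scalemxAr !scalerA !mulmxA.
have r0 : rN != 0 by rewrite gt_eqF // rN_gt0.
rewrite -rN_sq.
apply/matrixP => i j; rewrite !(entD, entN, entZ); by field.
Qed.

Lemma D2 : GG2 X y Sigma eta (cc1 X y Sigma b1 lam eta) =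
  Num.sqrt (nR n) *: (CS21 X Sigma eta *m invmx (CS11 X Sigma eta) *m Wn1 X eps - Wn2 X eps)
  - lam / 2 *: (CS21 X Sigma eta *m invmx (CS11 X Sigma eta) *m
       (sgnv b1 + (2 * eta / lam) *: (Sig11 Sigma *m b1))
     - (2 * eta / lam) *: (Sig21 Sigma *m b1)).
Proof.
have hc := D1.
set d := (X in b1 + X) in hc.
rewrite /GG2 hc /y Xcol CS21E iCE /Wn1 /Wn2 /X1 /X2 /Sig11 /Sig21 /nR -/N -/rN /M21 /d.
do 4 rewrite ?(mulmxDr, mulmxDl, mulmxN, mulNmx, scalerDr, scalerN, scalerA) -?scalemxAl -?scalemxAr.
rewrite !mulmxA.
have r0 : rN != 0 by rewrite gt_eqF // rN_gt0.
have n0 : N != 0 by rewrite gt_eqF // N_gt0.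
have l0 : lam != 0 by rewrite gt_eqF.
apply/matrixP => i j; rewrite !(entD, entN, entZ).
field; by rewrite l0 r0 -/N n0.
Qed.

Lemma AB_K : eventA X eps Sigma b1 lam eta -> eventB X eps Sigma b1 lam eta ->
  Kc X y Sigma b1 lam eta.
Proof.
move=> hA hB; split => [i|j].
- move: (hA i) D1'.
  generalize (invmx (CS11 X Sigma eta) *m Wn1 X eps) => a.
  generalize (invmx (CS11 X Sigma eta) *m sgnv b1) => sv.
  generalize (invmx (CS11 X Sigma eta) *m Sig11 Sigma *m b1) => t.
  generalize (cc1 X y Sigma b1 lam eta) => c hAi hD.
  have := congr1 (fun M : 'cV[R]_q => M i 0) hD; rewrite /= !(entD, entN, entZ) => he.
  apply: (near_pos _ _ _ he hAi).
  + by rewrite sqrtr_gt0 -/N N_gt0.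
  + by apply: divr_ge0; [exact: ltW | apply: mulr_ge0 => //; exact: ltW N_gt0].
  + by apply: divr_ge0; [exact: ltW | exact: ltW N_gt0].
- move: (hB j) D2.
  generalize (CS21 X Sigma eta *m invmx (CS11 X Sigma eta) *m Wn1 X eps - Wn2 X eps) => t1.
  generalize (CS21 X Sigma eta *m invmx (CS11 X Sigma eta) *m
       (sgnv b1 + (2 * eta / lam) *: (Sig11 Sigma *m b1))
     - (2 * eta / lam) *: (Sig21 Sigma *m b1)) => t2.
  generalize (GG2 X y Sigma eta (cc1 X y Sigma b1 lam eta)) => G hBj hD.
  have := congr1 (fun M : 'cV[R]_r => M j 0) hD; rewrite /= !(entD, entN, entZ) => he.
  apply: (B_bound _ hlam he hBj).
  by rewrite sqrtr_gt0 -/N N_gt0.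
Qed.
End Alg.


Section Meas.
Context d (T : measurableType d) (R : realType).

Lemma inv_measurable : measurable_fun setT (@GRing.inv R).
Proof.
have -> : @GRing.inv R = (fun x : R => if x == 0 then 0 else x^-1).
  by apply/funext => x; case: eqP => // ->; rewrite invr0.
apply: measurable_fun_if => //.
- by apply: measurable_realfun.measurable_fun_eqr => //; exact: measurable_cst.
- have -> : setT `&` ((fun x : R => x == 0) @^-1` [set false]) = [set x : R | x != 0].
    by apply/seteqP; split => x /=; [case=> _ /negbT|move=> /negbTE h; split].
  apply: measurable_realfun.open_continuous_measurable_fun; first exact: open_neq.
  by move=> x; rewrite inE /= => x0; apply: inv_continuous.
Qed.

Definition mmx m k (F : T -> 'M[R]_(m, k)) :=
  forall i j, measurable_fun setT (fun w => F w i j).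

Lemma mmx_cst m k (A : 'M[R]_(m, k)) : mmx (fun _ => A).
Proof. by move=> i j; exact: measurable_cst. Qed.

Lemma mmx_add m k (F G : T -> 'M[R]_(m, k)) : mmx F -> mmx G -> mmx (fun w => F w + G w).
Proof.
move=> hF hG i j; rewrite (_ : (fun w => _) = (fun w => F w i j) \+ (fun w => G w i j)).
  exact: measurable_funD.
by apply/funext => w; rewrite mxE.
Qed.

Lemma mmx_opp m k (F : T -> 'M[R]_(m, k)) : mmx F -> mmx (fun w => - F w).
Proof.
move=> hF i j; rewrite (_ : (fun w => _) = \- (fun w => F w i j)).
  exact: measurable_funN.
by apply/funext => w; rewrite mxE.
Qed.

Lemma mmx_sub m k (F G : T -> 'M[R]_(m, k)) : mmx F -> mmx G -> mmx (fun w => F w - G w).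
Proof. by move=> hF hG; apply: mmx_add => //; exact: mmx_opp. Qed.

Lemma mmx_scale m k (a : R) (F : T -> 'M[R]_(m, k)) : mmx F -> mmx (fun w => a *: F w).
Proof.
move=> hF i j; rewrite (_ : (fun w => _) = (fun w => a) \* (fun w => F w i j)).
  by apply: measurable_funM => //; exact: measurable_cst.
by apply/funext => w; rewrite mxE.
Qed.

Lemma mmx_mul m k l (F : T -> 'M[R]_(m, k)) (G : T -> 'M[R]_(k, l)) :
  mmx F -> mmx G -> mmx (fun w => F w *m G w).
Proof.
move=> hF hG i j; rewrite (_ : (fun w => _) = (fun w => \sum_(t <- index_enum 'I_k) F w i t * G w t j)).
  by apply: measurable_sum => t; exact: measurable_funM.
by apply/funext => w; rewrite mxE.
Qed.

Lemma mmx_tr m k (F : T -> 'M[R]_(m, k)) : mmx F -> mmx (fun w => (F w)^T).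
Proof.
move=> hF i j; rewrite (_ : (fun w => _) = (fun w => F w j i)) //.
by apply/funext => w; rewrite mxE.
Qed.

Lemma mmx_lsub m k1 k2 (F : T -> 'M[R]_(m, k1 + k2)) : mmx F -> mmx (fun w => lsubmx (F w)).
Proof. by move=> hF i j; under eq_fun do rewrite mxE; exact: hF. Qed.
Lemma mmx_rsub m k1 k2 (F : T -> 'M[R]_(m, k1 + k2)) : mmx F -> mmx (fun w => rsubmx (F w)).
Proof. by move=> hF i j; under eq_fun do rewrite mxE; exact: hF. Qed.

Lemma mmx_row' m k (F : T -> 'M[R]_(m.+1, k)) i0 : mmx F -> mmx (fun w => row' i0 (F w)).
Proof. by move=> hF i j; under eq_fun do rewrite mxE; exact: hF. Qed.
Lemma mmx_col' m k (F : T -> 'M[R]_(m, k.+1)) j0 : mmx F -> mmx (fun w => col' j0 (F w)).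
Proof. by move=> hF i j; under eq_fun do rewrite mxE; exact: hF. Qed.

Lemma mdet m (F : T -> 'M[R]_m) : mmx F -> measurable_fun setT (fun w => \det (F w)).
Proof.
move=> hF; rewrite /determinant.
apply: measurable_sum => s; apply: measurable_funM; first exact: measurable_cst.
by apply: measurable_prod => i _; exact: hF.
Qed.

Lemma mmx_adj m (F : T -> 'M[R]_m) : mmx F -> mmx (fun w => \adj (F w)).
Proof.
case: m F => [|m] F hF i j; first by case: i.
under eq_fun do rewrite mxE /cofactor.
apply: measurable_funM; first exact: measurable_cst.
by apply: mdet; apply: mmx_row'; apply: mmx_col'.
Qed.

Lemma mmx_inv m (F : T -> 'M[R]_m) : mmx F -> mmx (fun w => invmx (F w)).
Proof.
move=> hF i j; rewrite /invmx.
rewrite (_ : (fun w => _) = (fun w => if \det (F w) != 0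
   then (\det (F w))^-1 * \adj (F w) i j else F w i j)); last first.
  apply/funext => w; rewrite unitmxE unitfE.
  by case: ifP => _; rewrite ?mxE.
apply: measurable_fun_ifT.
- apply: measurable_neg; apply: measurable_realfun.measurable_fun_eqr; [exact: mdet | exact: measurable_cst].
- apply: measurable_funM; last exact: mmx_adj.
  exact: (measurableT_comp inv_measurable (mdet hF)).
- exact: hF.
Qed.

Lemma mset_bool (h : T -> bool) : measurable_fun setT h -> measurable [set w | h w].
Proof.
move=> mh; have := mh measurableT [set true] I; rewrite setTI.
by congr measurable; apply/seteqP; split => w /=.
Qed.

Lemma mset_forall (I : finType) (P : I -> set T) :
  (forall i, measurable (P i)) -> measurable [set w | forall i, P i w].
Proof.
move=> hP; rewrite (_ : [set w | _] = \bigcap_(i in setT) P i).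
  by apply: fin_bigcap_measurable => //; exact: finite_finset.
by apply/seteqP; split => w /= h i; [move=> _|]; apply: h.
Qed.

Lemma mset_lt (f g : T -> R) : measurable_fun setT f -> measurable_fun setT g ->
  measurable [set w | f w < g w].
Proof. by move=> mf mg; apply: mset_bool; exact: measurable_realfun.measurable_fun_ltr. Qed.
Lemma mset_le (f g : T -> R) : measurable_fun setT f -> measurable_fun setT g ->
  measurable [set w | f w <= g w].
Proof. by move=> mf mg; apply: mset_bool; exact: measurable_realfun.measurable_fun_ler. Qed.

Lemma mnorm (f : T -> R) : measurable_fun setT f -> measurable_fun setT (fun w => `|f w|).
Proof. by move=> mf; apply: measurableT_comp. Qed.


Lemma mM (f g : T -> R) : measurable_fun setT f -> measurable_fun setT g ->
  measurable_fun setT (fun w => f w * g w).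
Proof. by move=> mf mg; exact: measurable_funM. Qed.
Lemma mD (f g : T -> R) : measurable_fun setT f -> measurable_fun setT g ->
  measurable_fun setT (fun w => f w + g w).
Proof. by move=> mf mg; exact: measurable_funD. Qed.
Lemma mB (f g : T -> R) : measurable_fun setT f -> measurable_fun setT g ->
  measurable_fun setT (fun w => f w - g w).
Proof. by move=> mf mg; exact: measurable_funB. Qed.
Lemma mC (c : R) : measurable_fun setT (fun _ : T => c).
Proof. exact: measurable_cst. Qed.
End Meas.


Section Objs.
Context d (T : measurableType d) (R : realType) (n q r : nat)
  (X : T -> 'M[R]_(n, q + r)) (eps : T -> 'cV[R]_n)
  (Sigma : 'M[R]_(q + r)) (b1 : 'cV[R]_q) (lam eta : R).
Hypotheses (hX : mmx X) (he : mmx eps).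

Let mX1 : mmx (fun w => lsubmx (X w)). Proof. exact: mmx_lsub. Qed.
Let mX2 : mmx (fun w => rsubmx (X w)). Proof. exact: mmx_rsub. Qed.

Lemma mCS11 : mmx (fun w => CS11 (X w) Sigma eta).
Proof. by apply: mmx_add; [apply: mmx_scale; apply: mmx_mul => //; apply: mmx_tr|apply: mmx_cst]. Qed.
Lemma mCS21 : mmx (fun w => CS21 (X w) Sigma eta).
Proof. by apply: mmx_add; [apply: mmx_scale; apply: mmx_mul => //; apply: mmx_tr|apply: mmx_cst]. Qed.
Lemma mWn1 : mmx (fun w => Wn1 (X w) (eps w)).
Proof. by apply: mmx_scale; apply: mmx_mul => //; apply: mmx_tr. Qed.
Lemma mWn2 : mmx (fun w => Wn2 (X w) (eps w)).
Proof. by apply: mmx_scale; apply: mmx_mul => //; apply: mmx_tr. Qed.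
Lemma miC : mmx (fun w => invmx (CS11 (X w) Sigma eta)).
Proof. apply: mmx_inv; exact: mCS11. Qed.

Lemma mA : measurable [set w | eventA (X w) (eps w) Sigma b1 lam eta].
Proof.
apply: mset_forall => i; apply: mset_lt.
- by apply: mnorm; apply: mmx_mul; [exact: miC | exact: mWn1].
- apply: mM; first exact: mC.
  apply: mB; first apply: mB; first exact: mC.
  + by apply: mM; [exact: mC | apply: mnorm; apply: mmx_mul; [exact: miC | exact: mmx_cst]].
  + apply: mM; first exact: mC.
    by apply: mnorm; apply: mmx_mul; [apply: mmx_mul; [exact: miC|exact: mmx_cst] | exact: mmx_cst].
Qed.

Lemma mB' : measurable [set w | eventB (X w) (eps w) Sigma b1 lam eta].
Proof.
have mCi : mmx (fun w => CS21 (X w) Sigma eta *m invmx (CS11 (X w) Sigma eta)).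
  by apply: mmx_mul; [exact: mCS21 | exact: miC].
apply: mset_forall => j; apply: mset_le.
- apply: mnorm; apply: mmx_sub; [apply: mmx_mul; [exact: mCi | exact: mWn1] | exact: mWn2].
- apply: mB; first exact: mC.
  apply: mM; first exact: mC.
  apply: mnorm; apply: mmx_sub; last exact: mmx_cst.
  by apply: mmx_mul; [exact: mCi | exact: mmx_cst].
Qed.

Let y := fun w => X w *m col_mx b1 0 + eps w.
Let my : mmx y.
Proof. by apply: mmx_add => //; apply: mmx_mul => //; exact: mmx_cst. Qed.

Lemma mcc1 : mmx (fun w => cc1 (X w) (y w) Sigma b1 lam eta).
Proof.
apply: mmx_mul.
- apply: mmx_inv; apply: mmx_add; last exact: mmx_cst.
  by apply: mmx_mul => //; apply: mmx_tr.
- apply: mmx_sub; last exact: mmx_cst.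
  by apply: mmx_mul => //; apply: mmx_tr.
Qed.

Lemma mK : measurable [set w | Kc (X w) (y w) Sigma b1 lam eta].
Proof.
rewrite (_ : [set w | _] = [set w | forall i, 0 < cc1 (X w) (y w) Sigma b1 lam eta i 0 * b1 i 0]
  `&` [set w | forall j, `|2 * GG2 (X w) (y w) Sigma eta (cc1 (X w) (y w) Sigma b1 lam eta) j 0| <= lam]); last first.
  by apply/seteqP; split => w /=; case.
apply: measurableI.
- apply: mset_forall => i; apply: mset_lt; first exact: mC.
  by apply: mM; [exact: mcc1 | exact: mC].
- apply: mset_forall => j; apply: mset_le; last exact: mC.
  apply: mnorm; apply: mM; first exact: mC.
  apply: mmx_add.
  + apply: mmx_mul; first by apply: mmx_tr.
    by apply: mmx_sub => //; apply: mmx_mul => //; exact: mcc1.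
  + by apply: mmx_scale; apply: mmx_mul; [exact: mmx_cst | exact: mcc1].
Qed.
End Objs.

Unset Implicit Arguments.
Theorem lemma1 (R : realType) (n q r : nat) (hn : (0 < n)%N) (hq : (0 < q)%N)
  (hr : (0 < r)%N) (sigma : R) (hsigma : 0 < sigma)
  (Sigma : 'M[R]_(q + r)) (hSigma : sym_posdef Sigma)
  (Sm : 'M[R]_(q + r)) (hSm : is_Sigma_mhalf Sigma Sm)
  (b1 : 'cV[R]_q) (hb1 : forall i, b1 i 0 != 0)
  (lambda eta : R) (hlambda : 0 < lambda) (heta : 0 < eta)
  (d : measure_display) (Omega : measurableType d) (P : probability Omega R)
  (X : Omega -> 'M[R]_(n, q + r)) (eps : Omega -> 'cV[R]_n)
  (hXrows_indep : mutually_indep P (fun (i : 'I_n) (j : 'I_(q + r)) w => X w i j))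
  (hXrows_gauss : forall i : 'I_n, gaussian_vec P (fun j w => X w i j) Sigma)
  (heps_gauss : gaussian_vec P (fun k w => eps w k 0) ((sigma ^+ 2) *: 1%:M))
  (hXeps_indep : indep2 P (fun (ij : 'I_n * 'I_(q + r)) w => X w ij.1 ij.2)
                          (fun k w => eps w k 0)) :
  let betastar : 'cV[R]_(q + r) := col_mx b1 0 in
  let y := fun w => X w *m betastar + eps w in
  (P ([set w | eventA (X w) (eps w) Sigma b1 lambda eta]
       `&` [set w | eventB (X w) (eps w) Sigma b1 lambda eta])
   <= P [set w | sgnv (gEN (X w) (y w) Sm lambda eta) = sgnv betastar])%E.
Proof.
cbv zeta beta.
case: hSigma => hS hPD.
have hX : mmx X by move=> i j; exact: (hXrows_gauss i).1.
have he : mmx eps by move=> i j; rewrite (ord1 j); exact: heps_gauss.1.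
have -> : [set w | sgnv (gEN (X w) (X w *m col_mx b1 0 + eps w) Sm lambda eta) = sgnv (col_mx b1 0)]
    = [set w | Kc (X w) (X w *m col_mx b1 0 + eps w) Sigma b1 lambda eta].
  apply/seteqP; split => w /=.
  - exact: (S_K hSm hS hPD hlambda heta hb1 hq).
  - exact: (K_S hSm hS hPD hlambda heta).
apply: le_measure; rewrite ?inE.
- by apply: measurableI; [exact: mA | exact: mB'].
- exact: (mK Sigma b1 lambda eta hX he).
- move=> w [hA hB]; exact: (AB_K hS hPD hlambda heta hn hA hB).
Qed.
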